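(* Let $B$ be a commutative ring with identity and $A$ a dense subring of $B$. Then the map $i^*:\operatorname{spec} B\to\operatorname{spec} A$, $i^*(P)=P\cap A$, is one-one.
   Context: All rings are commutative with identity; subrings contain the identity. A subring $A$ of $B$ is dense in $B$ if for every ideal $I$ of $B$ and every $b\in B\setminus \operatorname{rad}(I)$ there exists $a\in B\setminus\operatorname{rad}(I)$ with $ab\in A$. *)

(* Defs.v *)
From mathcomp Require Import all_boot all_algebra.
Set Implicit Arguments. Unset Strict Implicit. Unset Printing Implicit Defensive.
Import GRing.Theory.
Local Open Scope ring_scope.

Definition is_ideal (B : comPzRingType) (I : B -> Prop) : Prop :=
  [/\ I 0,
      (forall x y, I x -> I y -> I (x + y)) &
      (forall r x, I x -> I (r * x))].

(* P is a prime ideal of B (proper, hence an element of spec B). *)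
Definition is_prime_ideal (B : comPzRingType) (P : B -> Prop) : Prop :=
  [/\ is_ideal P, ~ P 1 &
      (forall x y, P (x * y) -> P x \/ P y)].

Definition rad (B : comPzRingType) (I : B -> Prop) : B -> Prop :=
  fun b => exists n : nat, I (b ^+ n).

Definition is_subring (B : comPzRingType) (A : B -> Prop) : Prop :=
  [/\ A 1,
      (forall x y, A x -> A y -> A (x - y)) &
      (forall x y, A x -> A y -> A (x * y))].

Definition dense_subring (B : comPzRingType) (A : B -> Prop) : Prop :=
  forall I : B -> Prop, is_ideal I ->
  forall b : B, ~ rad I b ->
  exists a : B, ~ rad I a /\ A (a * b).

(* Main.v *)
Require Import Defs.
From mathcomp Require Import all_boot all_algebra.
From Stdlib Require Import Classical.
Import Defs.
Local Open Scope ring_scope.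
Import GRing.Theory.

Lemma rad_prime (B : comPzRingType) (P : B -> Prop) :
  is_prime_ideal P -> forall b, rad P b -> P b.
Proof.
move=> [HI H1 Hm] b [n]; elim: n => [|n IH].
  by rewrite expr0 => /H1.
by rewrite exprS => /Hm [//|/IH].
Qed.

Lemma half (B : comPzRingType) (A : B -> Prop) :
  dense_subring A ->
  forall P Q : B -> Prop, is_prime_ideal P -> is_prime_ideal Q ->
  (forall x : B, A x -> (P x -> Q x)) ->
  forall x : B, P x -> Q x.
Proof.
move=> Hd P Q HP HQ HPQ x Px.
apply: NNPP => nQx.
have nr : ~ rad Q x by move=> /(@rad_prime _ _ HQ).
have HQ' := HQ; case: HQ' => HI _ Hm.
have [a [na Aax]] := Hd Q HI x nr.
have Pax : P (a * x) by case: HP => HIp _ _; case: HIp => _ _ Hr; exact: (Hr a x).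
have := HPQ _ Aax Pax => /Hm [Qa|//].
by apply: na; exists 1%N; rewrite expr1.
Qed.

Theorem theorem3p3 (B : comPzRingType) (A : B -> Prop) :
  is_subring A -> dense_subring A ->
  forall P Q : B -> Prop, is_prime_ideal P -> is_prime_ideal Q ->
  (forall x : B, A x -> (P x <-> Q x)) ->
  forall x : B, P x <-> Q x.
Proof.
move=> _ Hd P Q HP HQ H x; split.
  by apply: (@half _ _ Hd _ _ HP HQ) => y Ay; case: (H y Ay).
by apply: (@half _ _ Hd _ _ HQ HP) => y Ay; case: (H y Ay).
Qed.
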